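(* Let $p$ be an odd prime, $\Gamma=\Gamma_0(N)$, $\mathcal O$ the ring of integers of a finite extension of $\mathbb Q_p$, $g\ge0$, and $\varphi\in H^1_c(\Gamma,V_g(\mathcal O))$. Then for every $n\ge1$ and $0\le i\le p-2$, $$\theta_{n,i}\Big(\varphi\big|\begin{pmatrix}p&0\\0&1\end{pmatrix}\Big)=p^g\cdot\nu^n_{n-1}\big(\theta_{n-1,i}(\varphi)\big).$$
   Context: $V_g(R)$: homogeneous degree-$g$ polynomials in $X,Y$ over $R$ with right action $(P|\gamma)(X,Y)=P(dX-cY,-bX+aY)$ for $\gamma=\begin{pmatrix}a&b\\c&d\end{pmatrix}$. $H^1_c(\Gamma',V_g(R))$ is identified with additive maps $\varphi:\mathrm{Div}^0(\mathbb P^1(\mathbb Q))\to V_g(R)$ with $\varphi(\gamma D)|\gamma=\varphi(D)$ for $\gamma\in\Gamma'$. For an integer matrix $\delta$ with positive determinant, $(\varphi|\delta)(D)=\varphi(\delta D)|\delta$ ($\delta$ acting on $\mathbb P^1(\mathbb Q)$ by Möbius transformations); $\varphi|\mathrm{diag}(p,1)$ is a modular symbol of level $\Gamma_0(Np)$. For $n\ge0$, $\mathcal G_n=\mathrm{Gal}(\mathbb Q(\mu_{p^n})/\mathbb Q)\cong(\mathbb Z/p^n)^\times$, $\sigma_a\leftrightarrow a$, $\vartheta_n(\varphi)=\sum_{a\in(\mathbb Z/p^n)^\times}\varphi(\{\infty\}-\{a/p^n\})|_{(X,Y)=(0,1)}\sigma_a$; with $\mathcal G_{n+1}\cong G_n\times(\mathbb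 Z/p)^\times$, $G_n$ cyclic of order $p^n$, $\omega$ Teichmüller, $\theta_{n,i}(\varphi)$ is the image of $\vartheta_{n+1}(\varphi)$ in $\mathcal O[G_n]$ under $(\tau,x)\mapsto\omega(x)^i\tau$. $\nu^n_{n-1}:\mathcal O[G_{n-1}]\to\mathcal O[G_n]$, $\sigma\mapsto\sum_{\tau\mapsto\sigma}\tau$. *)

(* Defs.v *)
From HB Require Import structures.
From mathcomp Require Import all_boot all_order all_algebra.
From mathcomp Require Import mpoly.
Set Implicit Arguments. Unset Strict Implicit. Unset Printing Implicit Defensive.
Import Order.TTheory GRing.Theory Num.Theory.
Local Open Scope ring_scope.

(* P^1(Q): None = infinity, Some q = q. *)
Definition P1 := option rat.
Definition infty : P1 := None.

Definition mat := 'M[int]_2.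
Definition ma (m : mat) : int := m ord0 ord0.
Definition mb (m : mat) : int := m ord0 ord_max.
Definition mc (m : mat) : int := m ord_max ord0.
Definition md (m : mat) : int := m ord_max ord_max.

Definition moeb (m : mat) (x : P1) : P1 :=
  match x with
  | None => if mc m == 0 then None else Some ((ma m)%:~R / (mc m)%:~R)
  | Some q =>
      let den := (mc m)%:~R * q + (md m)%:~R in
      if den == 0 then None else Some (((ma m)%:~R * q + (mb m)%:~R) / den)
  end.

Definition Gamma0 (N : nat) (m : mat) : bool :=
  (\det m == 1) && (N%:Z %| mc m)%Z.

Definition diagp1 (p : nat) : mat :=
  \matrix_(i < 2, j < 2) (if i == j then (if i == ord0 then p%:Z else 1) else 0).

(* V_g(R) is the set of g.-homog polynomials in {mpoly R[2]}, X = 'X_0, Y = 'X_1.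
   Right action (P|m)(X,Y) = P(dX - cY, -bX + aY). *)
Definition Xv {R : comNzRingType} : {mpoly R[2]} := 'X_(ord0 : 'I_2).
Definition Yv {R : comNzRingType} : {mpoly R[2]} := 'X_(ord_max : 'I_2).

Definition actV {R : comNzRingType} (m : mat) (P : {mpoly R[2]}) : {mpoly R[2]} :=
  P \mPo [tuple ((md m)%:~R *: Xv - (mc m)%:~R *: Yv);
                (- (mb m)%:~R *: Xv + (ma m)%:~R *: Yv)].

Definition ev01 {R : comNzRingType} (P : {mpoly R[2]}) : R :=
  P.@[fun i : 'I_2 => if i == ord0 then 0 else 1].

(* A modular symbol phi : Div^0(P^1(Q)) -> V_g(R) is encoded by its values
   phi r s := phi({r} - {s}); additivity on Div^0 is the cocycle relation. *)
Definition modsym (R : comNzRingType) := P1 -> P1 -> {mpoly R[2]}.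

Definition is_modsym {R : comNzRingType} (N g : nat) (phi : modsym R) : Prop :=
  [/\ forall r s, phi r s \is g.-homog,
      forall r s t, phi r s + phi s t = phi r t &
      forall gam, Gamma0 N gam -> forall r s,
        actV gam (phi (moeb gam r) (moeb gam s)) = phi r s].

Definition slash {R : comNzRingType} (phi : modsym R) (delta : mat) : modsym R :=
  fun r s => actV delta (phi (moeb delta r) (moeb delta s)).

(* Group rings O[G] for G a finite group of residues represented by natural
   numbers: an element is its coefficient function nat -> R (coefficients
   outside the group are 0). *)

(* (Z/p^m)^x = G_m (calligraphic), representatives 0 <= a < p^m. *)
Definition Ucal (p m : nat) : seq nat :=
  [seq a <- iota 0 (p ^ m) | coprime a (p ^ m)].

(* G_n = 1 + pZ mod p^(n+1), cyclic of order p^n, inside (Z/p^(n+1))^x;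
   it is the quotient of (Z/p^(n+1))^x by mu_(p-1) via a |-> a/omega(a). *)
Definition Gn (p n : nat) : seq nat :=
  [seq a <- Ucal p n.+1 | (a %% p == 1)%N].

Definition vartheta {R : comNzRingType} (p m : nat) (phi : modsym R) : nat -> R :=
  fun a => if a \in Ucal p m then
             ev01 (phi infty (Some (a%:R / (p ^ m)%:R)))
           else 0.

(* The isomorphism G_{n+1} = (Z/p^(n+1))^x ~ G_n x (Z/p)^x is
   a |-> (a * omega(a)^-1, a mod p), where omega(a) == a^(p^n) mod p^(n+1)
   is the Teichmueller representative.  The image of sigma_a in G_n is the
   tau in G_n with a = tau * a^(p^n) mod p^(n+1). *)
Definition projG (p n a tau : nat) : bool :=
  (a %% p ^ n.+1 == (tau * a ^ (p ^ n)) %% p ^ n.+1)%N.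

(* theta_{n,i}(phi): image of vartheta_{n+1}(phi) in R[G_n] under
   (tau, x) |-> omega(x)^i tau. *)
Definition theta {R : comNzRingType} (p : nat) (omega : nat -> R) (n i : nat)
  (phi : modsym R) : nat -> R :=
  fun tau => if tau \in Gn p n then
    \sum_(a <- Ucal p n.+1 | projG p n a tau)
       omega (a %% p)%N ^+ i * vartheta p n.+1 phi a
  else 0.

Definition nu {R : comNzRingType} (p n : nat) (f : nat -> R) : nat -> R :=
  fun tau => if tau \in Gn p n then
    \sum_(s <- Gn p n.-1 | (tau %% p ^ n == s)%N) f s
  else 0.

Definition is_teichmuller {R : comNzRingType} (p : nat) (omega : nat -> R) : Prop :=
  [/\ forall x, omega x = omega (x %% p)%N,
      forall x y, coprime x p -> coprime y p -> omega (x * y)%N = omega x * omega y,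
      forall x, coprime x p -> omega x ^+ p.-1 = 1 &
      forall x, coprime x p -> exists r : R, omega x - x%:R = p%:R * r].

(* Main.v *)
Require Import Defs.
From HB Require Import structures.
From mathcomp Require Import all_boot all_order all_algebra.
From mathcomp Require Import mpoly ring.
Set Implicit Arguments. Unset Strict Implicit. Unset Printing Implicit Defensive.
Import Order.TTheory GRing.Theory Num.Theory.
Local Open Scope ring_scope.

Lemma meval_homog_scale (R : comNzRingType) (g : nat) (P : {mpoly R[2]}) (c : R) (w : 'I_2 -> R) :
  P \is g.-homog -> P.@[fun i => c * w i] = c ^+ g * P.@[w].
Proof.
move=> hP; rewrite !mevalE mulr_sumr; apply: eq_big_seq => m Hm.
have Hd : mdeg m = g := dhomog_mf hP Hm. rewrite -Hd mdegE -prodrXr.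
under eq_bigr do rewrite exprMn.
rewrite big_split /= mulrA [_ * \prod_i c ^+ _]mulrC -!mulrA; congr (_ * _).
Qed.

Lemma ev01_actV (R : comNzRingType) (m : mat) (P : {mpoly R[2]}) :
  ev01 (actV m P) = P.@[fun i : 'I_2 => if i == ord0 then - (mc m)%:~R else (ma m)%:~R].
Proof.
rewrite /ev01 /actV comp_mpoly_meval; apply: meval_eq => i.
case: i => [[|[|i]] Hi] //=.
- rewrite (tnth_nth 0) /= /Xv /Yv mevalB !mevalZ !mevalXU /=. ring.
- rewrite (tnth_nth 0) /= /Xv /Yv mevalD !mevalZ !mevalXU /=. ring.
Qed.

Definition transl (k : nat) : mat :=
  \matrix_(i < 2, j < 2) (if i == j then 1 else if i == ord0 then k%:Z else 0).

Lemma transl_Gamma0 N k : Gamma0 N (transl k).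
Proof.
rewrite /Gamma0 /mc /transl mxE /= dvdz0 andbT.
rewrite (expand_det_row _ ord0) !big_ord_recl big_ord0 /cofactor !det_mx11 !mxE /=.
by rewrite !mulr0 !addr0 expr0 !mul1r.
Qed.

Lemma ev01_transl (R : comNzRingType) N g (phi : modsym R) (x : rat) (k : nat) :
  is_modsym N g phi ->
  ev01 (phi infty (Some (x + k%:R))) = ev01 (phi infty (Some x)).
Proof.
case=> _ _ inv.
rewrite -[in RHS](inv _ (transl_Gamma0 N k)) ev01_actV.
have -> : moeb (transl k) infty = infty by rewrite /moeb /mc mxE.
have -> : moeb (transl k) (Some x) = Some (x + k%:R).
  rewrite /moeb /mc /md /ma /mb !mxE /= mul0r add0r oner_eq0 divr1 mul1r.
  by rewrite -pmulrn.
rewrite /ev01; apply: meval_eq => i.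
by rewrite /mc /ma !mxE /= oppr0.
Qed.

Lemma ev01_slash (R : comNzRingType) N g (phi : modsym R) (p : nat) (x : rat) :
  is_modsym N g phi ->
  ev01 (slash phi (diagp1 p) infty (Some x)) = (p ^ g)%:R * ev01 (phi infty (Some (p%:R * x))).
Proof.
case=> hom _ _.
rewrite /slash ev01_actV.
have -> : moeb (diagp1 p) infty = infty by rewrite /moeb /mc mxE.
have -> : moeb (diagp1 p) (Some x) = Some (p%:R * x).
  rewrite /moeb /mc /md /ma /mb !mxE /= mul0r add0r oner_eq0 divr1 addr0.
  by rewrite -pmulrn.
rewrite natrX -(meval_homog_scale _ _ (hom _ _)) /ev01; apply: meval_eq => i.
rewrite /mc /ma !mxE /=; case: ifP => _; rewrite ?oppr0 ?mulr0 ?mulr1 //.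
Qed.

Lemma binom_step (p m x t : nat) : (p %| m)%N -> ((x + t * m) ^ p = x ^ p %[mod m * p])%N.
Proof.
move=> Hpm; rewrite expnDn big_ord_recl /= bin0 subn0 expn0 mul1n muln1.
have : (m * p %| \sum_(i < p) 'C(p, (bump 0 i)) * (x ^ (p - bump 0 i) * (t * m) ^ bump 0 i))%N.
  apply: dvdn_sum => -[[|j] Hj] _ /=.
    rewrite bin1 expn1 [(m * p)%N]mulnC; apply: dvdn_mul => //; do 2 apply: dvdn_mull => //.
  apply: dvdn_mull; apply: dvdn_mull.
  rewrite !expnS mulnA; apply: dvdn_mulr; apply: dvdn_mul; apply: dvdn_mull => //.
move/dvdnP=> [k ->]; by rewrite addnC modnMDl.
Qed.

Lemma lift_step p m y z : (p %| m)%N -> (y = z %[mod m])%N -> (y ^ p = z ^ p %[mod m * p])%N.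
Proof.
move=> Hpm Hyz.
have Ey := binom_step (y %% m) (y %/ m) Hpm; rewrite addnC -divn_eq in Ey.
have Ez := binom_step (z %% m) (z %/ m) Hpm; rewrite addnC -divn_eq in Ez.
by rewrite Ey Ez Hyz.
Qed.

Lemma factA p n x y : (x = y %[mod p])%N -> (x ^ (p ^ n) = y ^ (p ^ n) %[mod p ^ n.+1])%N.
Proof.
move=> Hxy; elim: n => [|n IH]; first by rewrite !expn0 !expn1.
rewrite (expnSr p n.+1) (expnSr p n) !expnM -(expnSr p n).
apply: lift_step => //; exact: dvdn_exp.
Qed.

Lemma teich p m a : prime p -> (a ^ (p ^ m.+1) = a ^ (p ^ m) %[mod p ^ m.+1])%N.
Proof.
move=> Hp; have := factA m (fermat_little a Hp).
by rewrite -expnM -expnS.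
Qed.

Lemma memUcal p k a : (a \in Ucal p k) = (a < p ^ k)%N && coprime a (p ^ k).
Proof. by rewrite mem_filter mem_iota add0n andbC. Qed.

Lemma uniqUcal p k : uniq (Ucal p k).
Proof. exact: filter_uniq (iota_uniq _ _). Qed.

Lemma ratE (p m a : nat) : prime p ->
  (p%:R * (a%:R / (p ^ m.+2)%:R) : rat) = (a %% p ^ m.+1)%:R / (p ^ m.+1)%:R + (a %/ p ^ m.+1)%:R.
Proof.
move=> Hp.
have Hq : ((p ^ m.+1)%:R != 0 :> rat) by rewrite pnatr_eq0 -lt0n expn_gt0 prime_gt0.
have Hp0 : (p%:R != 0 :> rat) by rewrite pnatr_eq0 -lt0n prime_gt0.
rewrite {1}(divn_eq a (p ^ m.+1)) (expnSr p m.+1) !natrD !natrM.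
by field; rewrite Hq Hp0.
Qed.


Section Keys.
Local Open Scope nat_scope.

Lemma modp_of_modq p k a a' : 0 < k -> a %% p ^ k = a' %% p ^ k -> a = a' %[mod p].
Proof.
move=> k0 H; have Hd : p %| p ^ k by rewrite dvdn_exp.
by rewrite -(modn_dvdm a Hd) -(modn_dvdm a' Hd) H.
Qed.

Lemma inj_key p m tau a a' : a < p ^ m.+2 -> a' < p ^ m.+2 ->
  projG p m.+1 a tau -> projG p m.+1 a' tau -> a %% p ^ m.+1 = a' %% p ^ m.+1 -> a = a'.
Proof.
move=> Ha Ha' /eqP H /eqP H' Hq.
have Hp := modp_of_modq (ltn0Sn m) Hq.
have F := factA m.+1 Hp.
rewrite -(modn_small Ha) -(modn_small Ha') H H' -modnMmr F modnMmr.
done.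
Qed.

Lemma fwd_key p m tau a : prime p -> a \in Ucal p m.+2 -> projG p m.+1 a tau ->
  (a %% p ^ m.+1) \in Ucal p m.+1 /\ projG p m (a %% p ^ m.+1) (tau %% p ^ m.+1).
Proof.
move=> Hp; rewrite memUcal => /andP [Ha Hc] /eqP H.
have Hp0 : 0 < p := prime_gt0 Hp.
have Hd : p ^ m.+1 %| p ^ m.+2 by rewrite dvdn_exp2l.
split.
  rewrite memUcal ltn_pmod ?expn_gt0 ?Hp0 // coprime_modl.
  by rewrite coprime_pexpr // -(coprime_pexpr _ _ (ltn0Sn m.+1)).
apply/eqP; rewrite [in RHS]modnMml -[in RHS]modnMmr modnXm modnMmr.
rewrite modn_mod -(modn_dvdm a Hd) H modn_dvdm //.
by rewrite -modnMmr teich // modnMmr.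
Qed.

Lemma bwd_key p m tau b : prime p -> coprime tau p -> b \in Ucal p m.+1 ->
  projG p m b (tau %% p ^ m.+1) ->
  let a := tau * b ^ (p ^ m.+1) %% p ^ m.+2 in
  a \in Ucal p m.+2 /\ projG p m.+1 a tau /\ a %% p ^ m.+1 = b.
Proof.
move=> Hp Ht; rewrite memUcal => /andP [Hb Hc] /eqP H a.
have Hp0 : 0 < p := prime_gt0 Hp.
have Hd : p ^ m.+1 %| p ^ m.+2 by rewrite dvdn_exp2l.
have Haq : a %% p ^ m.+1 = b.
  rewrite /a modn_dvdm // -modnMmr teich // modnMmr -modnMml.
  by rewrite -[RHS](modn_small Hb) H.
split.
  rewrite memUcal ltn_pmod ?expn_gt0 ?Hp0 //= coprime_modl coprime_pexpr //.
  rewrite coprimeMl Ht /= coprimeXl //.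
  by rewrite -(coprime_pexpr _ _ (ltn0Sn m)).
split=> //.
have Hab : a = b %[mod p].
  by apply: (@modp_of_modq p m.+1) => //; rewrite Haq modn_small.
apply/eqP; rewrite modn_mod -modnMmr.
by rewrite -[RHS]modnMmr (factA m.+1 Hab).
Qed.

End Keys.

Theorem lemma2p6 (p : nat) (R : comNzRingType) (omega : nat -> R) (N g : nat)
  (phi : modsym R) :
  prime p -> odd p -> (0 < N)%N -> is_teichmuller p omega ->
  is_modsym N g phi ->
  forall n i : nat, (1 <= n)%N -> (i <= p - 2)%N ->
  forall tau : nat,
    theta p omega n i (slash phi (diagp1 p)) tau
    = (p ^ g)%:R * nu p n (theta p omega n.-1 i phi) tau.
Proof.
move=> Hp _ _ [Hom _ _ _] Hphi [|m] // i _ _ tau.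
rewrite /theta /nu /=.
case: ifP => Htau; last by rewrite mulr0.
set q := (p ^ m.+1)%N.
have Hp0 : (0 < p)%N := prime_gt0 Hp.
have Hq0 : (0 < q)%N by rewrite expn_gt0 Hp0.
have HpQ : (p %| q)%N by rewrite dvdn_exp.
have HqQ : (q %| p ^ m.+2)%N by rewrite dvdn_exp2l.
have Hcop : forall x k, (0 < k)%N -> coprime x (p ^ k) = coprime x p.
  by move=> x k k0; rewrite coprime_pexpr.
move: Htau; rewrite /Gn mem_filter memUcal => /and3P [/eqP Htp Htlt Htcop].
set s0 := (tau %% q)%N.
have Hs0 : s0 \in Gn p m.
  rewrite /Gn mem_filter memUcal ltn_pmod // coprime_modl /s0 modn_dvdm // Htp eqxx /=.
  by rewrite Hcop // -(Hcop _ m.+2).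
rewrite -/(Gn p m).
have Hsum : forall F : nat -> R, \sum_(s <- Gn p m | s0 == s) F s = F s0.
  move=> F; rewrite -big_filter.
  have -> : [seq s <- Gn p m | s0 == s] = [seq s <- Gn p m | pred1 s0 s].
    by apply: eq_filter => s /=; rewrite eq_sym.
  by rewrite (filter_pred1_uniq (filter_uniq _ (uniqUcal p m.+1)) Hs0) big_seq1.
rewrite Hsum Hs0.
have Hmod : forall a, (a %% q %% p = a %% p)%N by move=> a; rewrite modn_dvdm.
pose K b := omega (b %% p)%N ^+ i * ev01 (phi infty (Some (b%:R / q%:R))).
have -> : \sum_(a <- Ucal p m.+1 | projG p m a s0)
     omega (a %% p)%N ^+ i * vartheta p m.+1 phi a
   = \sum_(a <- Ucal p m.+1 | projG p m a s0) K a.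
  rewrite !(big_seq_cond (fun a => projG p m a s0)); apply: eq_bigr => a /andP [Ha _].
  by rewrite /vartheta Ha.
have -> : \sum_(a <- Ucal p m.+2 | projG p m.+1 a tau)
     omega (a %% p)%N ^+ i * vartheta p m.+2 (slash phi (diagp1 p)) a
   = (p ^ g)%:R * \sum_(a <- Ucal p m.+2 | projG p m.+1 a tau) K (a %% q)%N.
  rewrite mulr_sumr !(big_seq_cond (fun a => projG p m.+1 a tau)).
  apply: eq_bigr => a /andP [Ha _].
  rewrite /vartheta Ha (ev01_slash _ _ Hphi) ratE // (ev01_transl _ _ Hphi) /K.
  rewrite mulrCA. congr (_ * (omega _ ^+ _ * _)). exact: (esym (Hmod a)).
suff -> : \sum_(a <- Ucal p m.+2 | projG p m.+1 a tau) K (a %% q)%N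
   = \sum_(a <- Ucal p m.+1 | projG p m a s0) K a by [].
rewrite -big_filter -[in RHS]big_filter.
rewrite -(big_map (fun a => (a %% q)%N) xpredT K).
apply: perm_big.
have Htc : coprime tau p by rewrite -(coprime_pexpr _ _ (ltn0Sn m.+1)).
rewrite /s0 /q.
apply: uniq_perm.
- rewrite map_inj_in_uniq; first exact: filter_uniq (uniqUcal _ _).
  move=> a a'; rewrite mem_filter => /andP [Pa Ua]; rewrite mem_filter => /andP [Pa' Ua'] Heq.
  move: Ua Ua'; rewrite !memUcal => /andP [Ha _] /andP [Ha' _].
  exact: inj_key Ha Ha' Pa Pa' Heq.
- exact: filter_uniq (uniqUcal _ _).
- move=> b; apply/mapP/idP.
  + case=> a; rewrite mem_filter => /andP [Pa Ua] ->.
    have [U P] := fwd_key Hp Ua Pa.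
    by rewrite mem_filter U P.
  + rewrite mem_filter => /andP [Pb Ub].
    have [U [P E]] := bwd_key Hp Htc Ub Pb.
    exists ((tau * b ^ (p ^ m.+1)) %% p ^ m.+2)%N; last by rewrite E.
    by rewrite mem_filter P U.
Qed.
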